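(* Let $n\geq 4$ be an integer and let $k\in\{2,3,\dots,\lfloor n/2\rfloor\}$. Then $$n\frac{\sin(\pi k/n)}{\sin(\pi/n)}>k(n-k)+1.$$ *)

(* Defs.v *)
From Stdlib Require Import Reals.

(* Main.v *)
Require Import Defs.
From Stdlib Require Import Reals Arith.
From Stdlib Require Import Lra Lia Psatz.
Open Scope R_scope.
Lemma pi_ub : PI < 3.24.
Proof.
  destruct (PI_ineq 5) as [_ H].
  unfold sum_f_R0, tg_alt, PI_tg in H. simpl in H. lra.
Qed.
Lemma sin_lb3 t : 0 <= t -> t <= 2 -> t <= PI -> t - t^3/6 <= sin t.
Proof.
  intros h0 h1 h2. destruct (SIN t h0 h2) as [H _].
  unfold sin_lb, sin_approx, sin_term, sum_f_R0 in H. simpl in H.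
  assert (t^2 <= 4) by nra.
  assert (0 <= t^5) by (apply pow_le; lra).
  nra.
Qed.
Lemma cos_lb2 t : 0 <= t -> t <= 1 -> 1 - t^2/2 <= cos t.
Proof.
  intros h0 h1. assert (PI2_1 := PI2_1).
  destruct (COS t ltac:(lra) ltac:(lra)) as [H _].
  unfold cos_lb, cos_approx, cos_term, sum_f_R0 in H. simpl in H.
  assert (t^2 <= 1) by nra.
  assert (0 <= t^4) by (apply pow_le; lra).
  nra.
Qed.

Theorem proposition5p2 (n k : nat) (hn : (4 <= n)%nat) (hk2 : (2 <= k)%nat)
  (hkn : (2 * k <= n)%nat) :
  INR n * (sin (PI * INR k / INR n) / sin (PI / INR n))
    > INR k * INR (n - k) + 1.
Proof.
  rewrite minus_INR by lia.
  assert (HN : 4 <= INR n) by (replace 4 with (INR 4) by (simpl; lra); apply le_INR; lia).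
  assert (HK : 2 <= INR k) by (replace 2 with (INR 2) by (simpl; lra); apply le_INR; lia).
  assert (HKN : 2 * INR k <= INR n) by (replace 2 with (INR 2) by (simpl; lra); rewrite <- mult_INR; apply le_INR; lia).
  set (N := INR n) in *. set (K := INR k) in *.
  assert (Hpi := pi_ub). assert (Hpi3 : 3 < PI) by (pose proof PI2_3_2; lra).
  set (x := PI / N).
  assert (HxN : x * N = PI) by (unfold x; field; lra).
  assert (Hx0 : 0 < x) by (unfold x; apply Rdiv_lt_0_compat; lra).
  assert (Hx1 : x <= 1) by nra.
  assert (Hsx : 0 < sin x) by (apply sin_gt_0; lra).
  assert (Hsxx : sin x < x) by (apply sin_lt_x; lra).
  replace (PI * K / N) with (K * x) by (unfold x; field; lra).
  destruct (Nat.eq_dec k 2) as [E|E].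
  - assert (K = 2) by (unfold K; rewrite E; simpl; lra).
    rewrite H. replace (2 * x) with (2 * x)%R by reflexivity.
    rewrite sin_2a.
    replace (2 * sin x * cos x / sin x) with (2 * cos x) by (field; lra).
    pose proof (cos_lb2 x ltac:(lra) Hx1).
    assert (x * x * N < 3) by nra.
    nra.
  - assert (HK3 : 3 <= K) by (unfold K; replace 3 with (INR 3) by (simpl; lra); apply le_INR; lia).
    set (t := K * x).
    assert (HtN : t * N = K * PI) by (unfold t; nra).
    assert (Ht0 : 0 < t) by (unfold t; nra).
    assert (Ht1 : t <= PI / 2) by nra.
    pose proof (sin_lb3 t ltac:(lra) ltac:(lra) ltac:(lra)) as Hs.
    assert (Hst : 0 < sin t) by (apply sin_gt_0; lra).
    assert (N * (sin t / sin x) >= N * (sin t / x)).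
    { apply Rle_ge, Rmult_le_compat_l; [lra|].
      apply Rmult_le_compat_l; [lra|]. apply Rinv_le_contravar; lra. }
    assert (N * (sin t / x) = N * N * sin t / PI) as E2.
    { rewrite <- HxN. field. lra. }
    assert (N * N * (t - t^3/6) / PI > K * (N - K) + 1).
    { replace (N * N * (t - t^3/6) / PI) with (N*K - K^3 * PI^2 / (6*N)).
      2:{ rewrite <- HxN. unfold t. field. lra. }
      assert (K^3*PI^2/(6*N) <= K^2 * PI^2/12).
      { apply Rmult_le_reg_r with (6*N); [lra|].
        replace (K ^ 3 * PI ^ 2 / (6 * N) * (6 * N)) with (K^3*PI^2) by (field; lra).
        assert (0 <= K^2*PI^2) by nra. nra. }
      assert (PI^2 < 10.5) by nra. assert (K^2 >= 9) by nra.
      assert (K^2 * (1 - PI^2/12) >= 9 * (1 - PI^2/12)) by (apply Rmult_ge_compat_r; lra).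
      assert (K^2 * (1 - PI^2/12) > 1) by lra.
      nra. }
    assert (N * N * (t - t^3/6) / PI <= N * N * sin t / PI).
    { unfold Rdiv. apply Rmult_le_compat_r.
      - left; apply Rinv_0_lt_compat; lra.
      - apply Rmult_le_compat_l; nra. }
    lra.
Qed.
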